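(* In the construction below, if there exists a connected subgraph $H$ of $G'$ with $S\subseteq V(H)$ and $|E(H)|\le 2k$ (an admissible solution of the Steiner Tree instance), then there exists an admissible solution $E^*$ of the constructed CSCN instance.
   Context: Let $G'=(V',E')$ be a connected undirected graph, let $S=\{u_1,\dots,u_s\}\subseteq V'$ with $s=|S|$, and let $k\ge 0$ be a real number such that $2k$ is an integer and $|E'|\ge 2k$. (Viewing every edge of $G'$ as having weight $\frac12$, the Steiner Tree instance asks for a connected subgraph $H$ of $G'$ with $S\subseteq V(H)$ and total edge weight at most $k$, i.e. $|E(H)|\le 2k$.) Let $t\ge 1$ be an integer. Let $V = V'\cup\{v_{i,j} : 1\le i\le s,\ 1\le j\le t\}$ (the $v_{i,j}$ are new vertices) and let $E$ be the set of all pairs of vertices of $V$ (edges undirected). Define $w^*:E\to\mathbb{R}$ by: $w^*(\{v_{i,j},u_i\})=1$ for all $i,j$; $w^*(\{v_{i,j},u\})=0$ for every $u\in V\setminus\{u_i\}$; $w^*(e)=\frac12$ for every $e\in E'$; $w^*(\{u,u'\})=0$ for $u,u'\in V'$ with $\{u,u'\}\notin E'$. Set $A=\frac{st+k}{st+2k}$ and $B=\frac{\frac12(|E'|-2k)}{st+2k}$. For nonempty $E^*\subseteq E$ let $\alpha(E^* )=\frac{\sum_{e\in E^*}w^*(e)}{|E^*|}$ and $\beta(E^* )=\frac{\sum_{e\in E\setminus E^*}w^*(e)}{|E^*|}$. The graph induced by $E^*$ has vertex set the vertices incident to some edge of $E^*$ and edge set $E^*$. An admissible solution of the constructed CSCN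 instance is a nonempty $E^*\subseteq E$ whose induced graph is connected and which satisfies $\alpha(E^* )\ge A$ and $\beta(E^* )\le B$. *)

(* Defs.v *)
From mathcomp Require Import all_boot all_order all_algebra.
Set Implicit Arguments. Unset Strict Implicit. Unset Printing Implicit Defensive.
Import Order.TTheory GRing.Theory Num.Theory.
Local Open Scope ring_scope.

(* A graph on a finite vertex type T is given by its edge set: a set of
   2-element subsets of T. *)
Definition is_edge_set (T : finType) (E : {set {set T}}) : bool :=
  [forall e in E, #|e| == 2]%N.

Definition adj (T : finType) (E : {set {set T}}) : rel T :=
  fun x y => [set x; y] \in E.

Definition incident (T : finType) (E : {set {set T}}) : {set T} :=
  \bigcup_(e in E) e.

Definition connected_on (T : finType) (W : {set T}) (E : {set {set T}}) : Prop :=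
  forall x y, x \in W -> y \in W -> connect (adj E) x y.

Definition induced_connected (T : finType) (E : {set {set T}}) : Prop :=
  connected_on (incident E) E.

Definition steiner_solution (T : finType) (E' : {set {set T}}) (S : {set T})
    (VH : {set T}) (EH : {set {set T}}) : Prop :=
  [/\ EH \subset E', (forall e, e \in EH -> e \subset VH),
      S \subset VH & connected_on VH EH].

(* Vertex set of the constructed instance: V' + {v_{i,j}} with
   inr (i, j) standing for v_{i+1, j+1}. *)
Definition CV (T : finType) (s t : nat) : finType := (T + ('I_s * 'I_t))%type.

Definition CE (T : finType) (s t : nat) : {set {set CV T s t}} :=
  [set e : {set CV T s t} | #|e| == 2]%N.

(* the weight w^* of an edge e of E; u i is the terminal u_{i+1} *)
Definition wstar (R : realFieldType) (T : finType) (s t : nat)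
    (E' : {set {set T}}) (u : 'I_s -> T) (e : {set CV T s t}) : R :=
  if [exists ij : 'I_s * 'I_t, (inr ij \in e) && (inl (u ij.1) \in e)] then 1
  else if [exists ij : 'I_s * 'I_t, inr ij \in e] then 0
  else if [set x | inl x \in e] \in E' then 1 / 2 else 0.

Definition alpha (R : realFieldType) (T : finType) (s t : nat)
    (E' : {set {set T}}) (u : 'I_s -> T) (Es : {set {set CV T s t}}) : R :=
  (\sum_(e in Es) wstar R E' u e) / (#|Es|%:R).

Definition beta (R : realFieldType) (T : finType) (s t : nat)
    (E' : {set {set T}}) (u : 'I_s -> T) (Es : {set {set CV T s t}}) : R :=
  (\sum_(e in CE T s t :\: Es) wstar R E' u e) / (#|Es|%:R).

(* k = k2 / 2 *)
Definition Aval (R : realFieldType) (s t k2 : nat) : R :=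
  ((s * t)%:R + k2%:R / 2) / ((s * t)%:R + k2%:R).

Definition Bval (R : realFieldType) (s t k2 nE : nat) : R :=
  (1 / 2 * (nE%:R - k2%:R)) / ((s * t)%:R + k2%:R).

Definition cscn_admissible (R : realFieldType) (T : finType) (s t k2 : nat)
    (E' : {set {set T}}) (u : 'I_s -> T) (Es : {set {set CV T s t}}) : Prop :=
  [/\ Es \subset CE T s t, Es != set0, induced_connected Es,
      Aval R s t k2 <= alpha R E' u Es
    & beta R E' u Es <= Bval R s t k2 #|E'|].

(* Main.v *)
Require Import Defs.
From mathcomp Require Import all_boot all_order all_algebra.
Import Order.TTheory GRing.Theory Num.Theory.
Set Implicit Arguments. Unset Strict Implicit.

Lemma exit_path (T : finType) (e : rel T) (P : pred T) w p :
  P w -> ~~ P (last w p) -> path e w p -> exists x y, [&& P x, ~~ P y & e x y].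
Proof.
elim: p w => [|z p IH] w /= Pw; first by rewrite Pw.
move=> nP /andP[ewz pz]; case Pz: (P z); first exact: IH Pz nP pz.
by exists w, z; rewrite Pw Pz ewz.
Qed.

Lemma cross (T : finType) (E' EH : {set {set T}}) (W : {set T}) w :
  is_edge_set E' -> connected_on [set: T] E' -> EH \subset E' ->
  (forall e, e \in EH -> e \subset W) -> w \in W -> (#|EH| < #|E'|)%N ->
  exists x y, x \in W /\ [set x; y] \in E' :\: EH.
Proof.
move=> hE hC sub hW wW lt.
have : E' :\: EH != set0.
  rewrite setD_eq0; apply/negP => /subset_leq_card; by rewrite leqNgt lt.
case/set0Pn => e eD.
have := eD; rewrite inE => /andP[eEH eE].
have /cards2P [a [b [ab ee]]] : #|e| == 2 by move/forallP: hE => /(_ e) /implyP; apply.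
case aW: (a \in W); first by exists a, b; rewrite -ee.
have /connectP [p pp pl] := hC w a (in_setT _) (in_setT _).
have npl : ~~ ((fun z => z \in W) (last w p)) by rewrite /= -pl aW.
have [x [y /and3P [xW yW exy]]] := @exit_path _ _ (fun z => z \in W) w p wW npl pp.
exists x, y; split => //; rewrite inE; move: exy; rewrite /adj => ->; rewrite andbT; apply/negP => /hW.
by move/subsetP => /(_ y); rewrite !inE eqxx orbT => /(_ isT); apply/negP.
Qed.

Lemma extend (T : finType) (E' : {set {set T}}) (n : nat) : forall (d : nat) (W : {set T}) (EH : {set {set T}}),
  is_edge_set E' -> connected_on [set: T] E' -> EH \subset E' ->
  (forall e, e \in EH -> e \subset W) -> connected_on W EH -> W != set0 ->
  (#|EH| <= n <= #|E'|)%N -> d = (n - #|EH|)%N ->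
  exists (W' : {set T}) (EH' : {set {set T}}), [/\ EH' \subset E', (forall e, e \in EH' -> e \subset W'),
     W \subset W', connected_on W' EH' & #|EH'| = n].
Proof.
elim=> [|d IH] W EH hE hC sub hW cW Wn /andP[l1 l2] hd.
  exists W, EH; split => //; apply/eqP; rewrite eqn_leq l1 /=.
  by rewrite -subn_eq0 -hd.
case/set0Pn: Wn => w wW.
have lt : (#|EH| < #|E'|)%N by apply: leq_trans l2; rewrite -subn_gt0 -hd.
have [x [y [xW]]] := cross hE hC sub hW wW lt.
rewrite inE => /andP[nEH xyE].
have s1 : [set x; y] |: EH \subset E' by rewrite subUset sub1set xyE.
have s2 : forall e, e \in [set x; y] |: EH -> e \subset y |: W.
  move=> e; rewrite in_setU1 => /orP[/eqP-> | /hW eW].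
    by apply/subsetP => z; rewrite !inE => /orP[/eqP->|->]; rewrite ?xW ?eqxx ?orbT.
  by apply: subset_trans eW (subsetUr _ _).
have s3 : connected_on (y |: W) ([set x; y] |: EH).
  have sr : subrel (adj EH) (connect (adj ([set x; y] |: EH))).
    by move=> a b hab; apply: connect1; rewrite /adj in_setU1; rewrite /adj in hab; rewrite hab orbT.
  have xy : adj ([set x; y] |: EH) x y by rewrite /adj in_setU1 eqxx.
  move=> a b; rewrite !inE => /orP[/eqP-> | aW] /orP[/eqP-> | bW].
  + exact: connect0.
  + apply: connect_trans (connect1 _) (connect_sub sr (cW x b xW bW)).
    by rewrite /adj in_setU1 setUC eqxx.
  + exact: connect_trans (connect_sub sr (cW a x aW xW)) (connect1 xy).
  + by apply: (connect_sub sr); apply: cW.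
have s4 : y |: W != set0 by apply/set0Pn; exists w; rewrite inE wW orbT.
have s5 : (#|[set x; y] |: EH| <= n <= #|E'|)%N.
  by rewrite cardsU1 nEH add1n l2 andbT -subn_gt0 -hd.
have s6 : d = (n - #|[set x; y] |: EH|)%N by rewrite cardsU1 nEH add1n subnS -hd.
have [W' [EH' [t1 t2 t3 t4 t5]]] := IH _ _ hE hC s1 s2 s3 s4 s5 s6.
by exists W', EH'; split => //; apply: subset_trans t3; apply: subsetUr.
Qed.

Local Open Scope ring_scope.

Lemma sum_ind (R : realFieldType) (I : finType) (X Y : {set I}) :
  \sum_(e in X) ((e \in Y)%:R : R) = #|X :&: Y|%:R.
Proof.
rewrite (eq_bigr (fun e => if e \in Y then (1 : R) else 0)); last by move=> e _; case: (e \in Y).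
rewrite -big_mkcondr /= (eq_bigl (fun e => e \in X :&: Y)); last by move=> e; rewrite inE.
by rewrite sumr_const.
Qed.

Lemma set2_eq (I : finType) (e : {set I}) a b :
  #|e| = 2%N -> a \in e -> b \in e -> a != b -> e = [set a; b].
Proof.
move=> ce ae be ab; apply/esym/eqP; rewrite eqEcard ce cards2 ab leqnn andbT.
by apply/subsetP => z; rewrite !inE => /orP[/eqP->|/eqP->].
Qed.

Section Main.
Variables (R : realFieldType) (T : finType) (E' : {set {set T}}) (s t : nat) (u : 'I_s -> T).
Local Notation V := (CV T s t).
Definition L (f : {set T}) : {set V} := [set (@inl T ('I_s * 'I_t)) x | x in f].
Definition A2 : {set {set V}} :=
  [set [set (@inr T ('I_s * 'I_t)) ij; inl (u ij.1)] | ij : 'I_s * 'I_t].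
Definition Fall : {set {set V}} := [set L f | f in E'].

Lemma L_inj : injective L.
Proof. exact: imset_inj inl_inj. Qed.

Lemma memL f x : (@inl T ('I_s * 'I_t) x \in L f) = (x \in f).
Proof. exact: mem_imset inl_inj. Qed.

Lemma inrL f ij : (@inr T ('I_s * 'I_t) ij \in L f) = false.
Proof. by apply/imsetP => -[x _]. Qed.

Lemma notFall (e : {set V}) ij : @inr T ('I_s * 'I_t) ij \in e -> e \notin Fall.
Proof. by move=> h; apply/imsetP => -[f _ ef]; move: h; rewrite ef inrL. Qed.

Lemma A2_inr (e : {set V}) : e \in A2 -> exists ij, (@inr T ('I_s * 'I_t) ij \in e) && (inl (u ij.1) \in e).
Proof. by case/imsetP => ij _ ->; exists ij; rewrite !inE !eqxx orbT. Qed.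

Lemma A2_inj : injective (fun ij => [set (@inr T ('I_s * 'I_t)) ij; inl (u ij.1)]).
Proof.
move=> ij kl /setP /(_ (inr ij)); rewrite !inE eqxx /= => /esym /orP[/eqP [] //|].
by [].
Qed.

Lemma wstarE (e : {set V}) : #|e| = 2%N ->
  wstar R E' u e = (e \in A2)%:R + (e \in Fall)%:R / 2.
Proof.
move=> ce; rewrite /wstar; case: ifP => [/existsP [ij /andP[h1 h2]] | nex1].
  have -> : e = [set inr ij; inl (u ij.1)] by apply: set2_eq.
  rewrite (negbTE (notFall (ij := ij) _)) ?inE ?eqxx //.
  have -> : [set inr ij; inl (u ij.1)] \in A2 by apply/imsetP; exists ij.
  by rewrite /= mulr1n mulr0n mul0r addr0.
case: ifP => [/existsP [ij h1] | nex2].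
  rewrite (negbTE (notFall h1)).
  case eA: (e \in A2); last by rewrite mulr0n mul0r addr0.
  by have [kl hk] := A2_inr eA; move: nex1; rewrite (introT existsP) //; exists kl.
have eL : e = L [set x | inl x \in e].
  apply/setP => z; case: z => [x | ij]; first by rewrite memL inE.
  rewrite inrL; apply/negbTE/negP => h; move: nex2; rewrite (introT existsP) //.
  by exists ij.
have -> : (e \in A2) = false.
  apply/negbTE/negP => /A2_inr [ij /andP [h _]].
  by move: nex2; rewrite (introT existsP) //; exists ij.
rewrite {2}eL mem_imset; last exact: L_inj.
by case: ifP; rewrite /= ?mulr1n ?mulr0n ?add0r ?mul0r.
Qed.

End Main.

Unset Implicit Arguments. Set Strict Implicit.

Theorem lemma3 (R : realFieldType) (T : finType) (E' : {set {set T}})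
    (s t k2 : nat) (u : 'I_s -> T) :
  is_edge_set E' ->
  connected_on [set: T] E' ->
  injective u ->
  (0 < s)%N ->
  (1 <= t)%N ->
  (k2 <= #|E'|)%N ->
  (exists (VH : {set T}) (EH : {set {set T}}),
      steiner_solution E' [set u i | i : 'I_s] VH EH /\ (#|EH| <= k2)%N) ->
  exists Es : {set {set CV T s t}}, cscn_admissible R k2 E' u Es.
Proof.
move=> hE hC uinj hs ht hk [VH [EH [[sub hW Ssub cW] cEH]]].
pose i0 : 'I_s := Ordinal hs.
have ui0 : forall i, u i \in VH by move=> i; apply: (subsetP Ssub); apply: imset_f.
have VHn : VH != set0 by apply/set0Pn; exists (u i0).
have [W [EH' [t1 t2 t3 t4 t5]]] :=
  @extend T E' k2 _ VH EH hE hC sub hW cW VHn (introT andP (conj cEH hk)) (erefl _).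
pose A1 : {set {set CV T s t}} := [set L s t f | f in EH'].
pose Es := A1 :|: A2 t u.
have cE2 : forall f, f \in E' -> #|f| = 2%N.
  by move=> f fE; move/forallP: hE => /(_ f) /implyP /(_ fE) /eqP.
have A1F : A1 \subset Fall E' s t.
  by apply: imsetS.
have FCE : Fall E' s t \subset CE T s t.
  apply/subsetP => e /imsetP [f fE ->]; rewrite inE /L card_imset ?cE2 //.
  exact: inl_inj.
have A2CE : A2 t u \subset CE T s t.
  apply/subsetP => e /imsetP [ij _ ->]; rewrite inE cards2.
  by [].
have EsCE : Es \subset CE T s t.
  by rewrite subUset A2CE (subset_trans A1F FCE).
have A2F : A2 t u :&: Fall E' s t = set0.
  apply/setP => e; rewrite !inE; apply/negbTE/negP => /andP [/A2_inr [ij /andP [h _]]].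
  by move: (notFall E' h) => /negbTE ->.
have A1A2 : A1 :&: A2 t u = set0.
  apply/setP => e; rewrite !inE; apply/negbTE/negP => /andP [h1 h2].
  by move: (A2F) => /setP /(_ e); rewrite !inE h2 (subsetP A1F _ h1).
have cA1 : #|A1| = k2 by rewrite card_imset ?t5 //; exact: L_inj.
have cA2 : #|A2 t u| = (s * t)%N by rewrite card_imset ?card_prod ?card_ord //; exact: A2_inj.
have cEs : #|Es| = (k2 + s * t)%N by rewrite cardsU A1A2 cards0 subn0 cA1 cA2.
have sumE : forall X : {set {set CV T s t}}, X \subset CE T s t -> \sum_(e in X) wstar R E' u e =
    #|X :&: A2 t u|%:R + #|X :&: Fall E' s t|%:R / 2.
  move=> X XC; rewrite (eq_bigr (fun e => (e \in A2 t u)%:R + (e \in Fall E' s t)%:R / 2)).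
    by rewrite big_split /= -mulr_suml !sum_ind.
  by move=> e eX; apply: (wstarE R E' u); move: (subsetP XC e eX); rewrite inE => /eqP.
have den : ((s * t)%:R + k2%:R : R) != 0.
  by rewrite -natrD pnatr_eq0 -lt0n addn_gt0 muln_gt0 hs ht.
exists Es; split => //.
- by apply/set0Pn; exists [set inr (i0, Ordinal ht); inl (u i0)]; rewrite inE; apply/orP; right; apply: imset_f.
- have symA : symmetric (adj Es) by move=> a b; rewrite /adj setUC.
  have lift : forall a b, connect (adj EH') a b -> connect (adj Es) (inl a) (inl b).
    move=> a b /connectP [p pp ->]; elim: p a pp => [|z p IH] a /=; first by move=> _; exact: connect0.
    move=> /andP [az pz]; apply: connect_trans (connect1 _) (IH z pz).
    rewrite /adj in_setU; apply/orP; left.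
    have -> : [set (inl a : CV T s t); inl z] = L s t [set a; z] by rewrite /L imsetU1 imset_set1.
    exact: imset_f.
  have hub : forall z, z \in incident Es -> connect (adj Es) z (inl (u i0)).
    move=> z /bigcupP [e eEs ze]; move: eEs; rewrite in_setU => /orP [/imsetP [f fE ef] | /imsetP [ij _ ef]].
    - move: ze; rewrite ef => /imsetP [x xf ->]; apply: lift; apply: t4.
        exact: (subsetP (t2 f fE) x xf).
      exact: (subsetP t3 _ (ui0 i0)).
    - move: ze; rewrite ef !inE => /orP [/eqP -> | /eqP ->].
      + apply: connect_trans (connect1 _) (lift _ _ (t4 _ _ (subsetP t3 _ (ui0 ij.1)) (subsetP t3 _ (ui0 i0)))).
        rewrite /adj in_setU; apply/orP; right; apply/imsetP; exists ij => //.
      + exact: (lift _ _ (t4 _ _ (subsetP t3 _ (ui0 ij.1)) (subsetP t3 _ (ui0 i0)))).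
  move=> x y hx hy; apply: connect_trans (hub x hx) _.
  by rewrite (sym_connect_sym symA); exact: hub y hy.
- rewrite /alpha sumE // /Aval cEs.
  have -> : Es :&: A2 t u = A2 t u by apply/setIidPr; apply: subsetUr.
  have -> : Es :&: Fall E' s t = A1 by rewrite setIUl A2F setU0; apply/setIidPl.
  by rewrite cA1 cA2 natrD [k2%:R + _]addrC.
- rewrite /beta sumE ?subsetDl // /Bval cEs.
  have -> : (CE T s t :\: Es) :&: A2 t u = set0.
    apply/setP => e; rewrite in_setI in_setD in_set0; case eA: (e \in A2 t u); rewrite ?andbF //.
    by rewrite (_ : e \in Es) // in_setU eA orbT.
  have -> : (CE T s t :\: Es) :&: Fall E' s t = Fall E' s t :\: A1.
    apply/setP => e; rewrite in_setI !in_setD in_setU.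
    case eF: (e \in Fall E' s t); rewrite ?andbF // andbT.
    have -> : (e \in A2 t u) = false.
      by apply/negbTE/negP => eA; move: A2F => /setP /(_ e); rewrite in_setI in_set0 eA eF.
    by rewrite orbF (subsetP FCE _ eF).
  rewrite cardsD (setIidPr A1F) cA1 card_imset ?natrB //; last exact: L_inj.
  by rewrite cards0 add0r natrD [k2%:R + _]addrC mul1r [_^-1 * _]mulrC.
Qed.
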